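(* Let $A$ be an $m\times m$ coloring matrix all of whose row sums equal $r$. Then for every color $1\le i\le m$ and every $n\ge1$, $t_A^{(i)}(n)=r^{n-1}C_{n-1}$, and hence $t_A(n)=m\,r^{n-1}C_{n-1}$. In particular, all colors of $A$ are pairwise interchangeable, and any two $m\times m$ coloring matrices whose row sums all equal $r$ are strictly tree coloring equivalent.
   Context: A plane tree is an unlabeled rooted tree in which the children of every vertex are linearly ordered. A coloring matrix is an $m\times m$ matrix $A=(a_{ij})$ with entries in $\{0,1\}$. An $A$-coloring of a plane tree assigns to each vertex a color in $\{1,\dots,m\}$ such that whenever a vertex of color $j$ is a child of a vertex of color $i$, $a_{ij}=1$. Let $t_A(n)$ be the number of pairs (plane tree with $n$ vertices, $A$-coloring of it) and $t_A^{(i)}(n)$ the number of those with root color $i$. $C_k=\frac{1}{k+1}\binom{2k}{k}$ is the $k$-th Catalan number. Colors $i,j$ are interchangeable for $A$ if $t_A^{(i)}(n)=t_A^{(j)}(n)$ for all $n\ge1$. Two coloring matrices $A,B$ of the same size are strictly tree coloring equivalent if $t_A^{(i)}(n)=t_B^{(i)}(n)$ for all $n\ge1$ and all $i$. *)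

(* Defs.v *)
From mathcomp Require Import all_boot all_algebra.
From Stdlib Require Import List.
Set Implicit Arguments. Unset Strict Implicit. Unset Printing Implicit Defensive.

(* A vertex-colored plane tree: a root color and the ordered list of subtrees. *)
Inductive ctree (C : Type) : Type :=
  | CNode : C -> list (ctree C) -> ctree C.
Arguments CNode {C}.

Definition root_color {C} (t : ctree C) : C := let: CNode c _ := t in c.

Fixpoint nverts {C} (t : ctree C) : nat :=
  let: CNode _ ts := t in (fold_right (fun u acc => nverts u + acc) 0 ts).+1.

Fixpoint A_colored {m} (A : 'M[bool]_m) (t : ctree 'I_m) : Prop :=
  let: CNode i ts := t in
  (fold_right (fun u acc => (A i (root_color u) = true) /\ A_colored A u /\ acc) True ts).

Definition colored_trees_root {m} (A : 'M[bool]_m) (i : 'I_m) (n : nat)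
  (t : ctree 'I_m) : Prop :=
  nverts t = n /\ A_colored A t /\ root_color t = i.

Definition colored_trees {m} (A : 'M[bool]_m) (n : nat) (t : ctree 'I_m) : Prop :=
  nverts t = n /\ A_colored A t.

Definition card_is {T} (P : T -> Prop) (k : nat) : Prop :=
  exists s : list T, NoDup s /\ (forall x, In x s <-> P x) /\ length s = k.

Definition tA_root {m} (A : 'M[bool]_m) (i : 'I_m) (n k : nat) : Prop :=
  card_is (colored_trees_root A i n) k.
Definition tA {m} (A : 'M[bool]_m) (n k : nat) : Prop :=
  card_is (colored_trees A n) k.

Definition catalan (k : nat) : nat := 'C(k.*2, k) %/ k.+1.

Definition interchangeable {m} (A : 'M[bool]_m) (i j : 'I_m) : Prop :=
  forall n k, 1 <= n -> (tA_root A i n k <-> tA_root A j n k).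
Definition strictly_equiv {m} (A B : 'M[bool]_m) : Prop :=
  forall n i k, 1 <= n -> (tA_root A i n k <-> tA_root B i n k).

Definition row_sums_eq {m} (A : 'M[bool]_m) (r : nat) : Prop :=
  forall i : 'I_m, \sum_(j < m) (A i j : nat) = r.

(* Main.v *)
Require Import Defs.
From mathcomp Require Import all_boot all_algebra.
From Stdlib Require List.
From mathcomp Require Import zify.

Set Implicit Arguments. Unset Strict Implicit. Unset Printing Implicit Defensive.

Fixpoint g (n k : nat) : nat :=
  match n with
  | 0 => if k is 0 then 1 else 0
  | S n' => if k is S k' then \sum_(j < n'.+1) g n' (j + k') else 0
  end.

Lemma g_big n k : n < k -> g n k = 0.
Proof.
elim: n k => [|n IH] [|k] //= H.
rewrite big1 // => j _; apply: IH; lia.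
Qed.

Lemma g_rec n k : g n.+1 k.+1 = g n k + g n.+1 k.+2.
Proof.
rewrite /= big_ord_recl big_ord_recr /= (g_big (n := n) (k := n + k.+1)); last lia.
rewrite add0n addn0; congr (_ + _); apply: eq_bigr => j _; congr (g _ _); rewrite /bump /=; lia.
Qed.

Lemma g_main a c : g (a + c).+1 c.+1 + 'C(a + a + c, (a + c).+1) = 'C(a + a + c, a + c).
Proof.
elim: a c => [|a IHa] c.
  elim: c => [|c IHc]; first by rewrite /= big_ord1.
  rewrite !add0n in IHc *.
  rewrite g_rec (g_big (n := c.+2) (k := c.+3)); last lia.
  rewrite bin_small in IHc; last lia.
  rewrite binn in IHc; rewrite bin_small ?binn; lia.
elim: c => [|c IHc].
  rewrite !addn0 g_rec.
  have -> : g a.+1 0 = 0 by [].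
  rewrite add0n.
  have := IHa 1.
  have -> : (a + 1).+1 = a.+2 by lia.
  have -> : a + a + 1 = (a + a).+1 by lia.
  have -> : a.+1 + a.+1 = (a + a).+2 by lia.
  have -> : a + 1 = a.+1 by lia.
  rewrite (binS (a + a).+1 a.+1) (binS (a+a).+1 a).
  have : 'C((a + a).+1, a) = 'C((a + a).+1, a.+1).
    rewrite -bin_sub; last lia. congr 'C(_, _); lia.
  lia.
rewrite g_rec.
have H1 := IHc.
have H2 := IHa c.+2.
rewrite !addSn !addnS !addSn in H1 H2 *.
set N := a + a + c in H1 H2 *; set K := a + c in H1 H2 *.
rewrite (binS N.+2 K.+2) (binS N.+2 K.+1).
lia.
Qed.

Lemma g_catalan n : g n.+1 1 = catalan n.
Proof.
have := g_main n 0.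
rewrite !addn0 => H.
have H2 := mul_bin_left (n + n) n.
rewrite (_ : n + n - n = n) in H2; last lia.
rewrite /catalan -addnn.
have -> : 'C(n + n, n) = n.+1 * g n.+1 1 by nia.
by rewrite mulKn.
Qed.

Lemma In_mem (T : eqType) (x : T) (s : list T) : x \in s -> List.In x s.
Proof.
elim: s => [|y s IH] //=; rewrite in_cons => /orP [/eqP ->|H]; [by left|right; exact: IH].
Qed.

Lemma uniq_NoDup (T : eqType) (s : list T) : uniq s -> List.NoDup s.
Proof.
elim: s => [|y s IH] /=; first by constructor.
move=> /andP [Hy Hs]; constructor; last exact: IH.
move=> Hin; move/negP: Hy; apply.
elim: s Hin {IH Hs} => [|z s IH] //= [->|H]; rewrite in_cons; first by rewrite eqxx.
by rewrite IH ?orbT.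
Qed.

Lemma NoDup_flat_map_key (X Y : Type) (f : X -> list Y) (key : Y -> X) (l : list X) :
  List.NoDup l -> (forall x, List.In x l -> List.NoDup (f x)) ->
  (forall x y, List.In x l -> List.In y (f x) -> key y = x) ->
  List.NoDup (List.flat_map f l).
Proof.
elim: l => [|a l IH] /=; first by constructor.
move=> Hnd Hf Hk; inversion Hnd; subst.
apply: List.NoDup_app.
- by apply: Hf; left.
- apply: IH => //.
  + by move=> x Hx; apply: Hf; right.
  + by move=> x y Hx Hy; apply: Hk => //; right.
- move=> y Hy1 /List.in_flat_map [x [Hx Hy2]].
  have E1 : key y = a by apply: Hk => //; left.
  have E2 : key y = x by apply: Hk => //; right.
  by apply: H1; rewrite -E1 E2.
Qed.

Lemma NoDup_map_inj (X Y : Type) (f : X -> Y) (l : list X) :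
  (forall x y, f x = f y -> x = y) -> List.NoDup l -> List.NoDup (List.map f l).
Proof.
move=> Hi; elim: l => [|a l IH] /= Hnd; first by constructor.
inversion Hnd; subst; constructor; last exact: IH.
move=> /List.in_map_iff [x [Hx Hin]]; apply: H1; by rewrite -(Hi _ _ Hx).
Qed.

Lemma length_flat_map_const (X Y : Type) (f : X -> list Y) (l : list X) L :
  (forall x, List.In x l -> length (f x) = L) -> length (List.flat_map f l) = length l * L.
Proof.
elim: l => [|a l IH] //= H.
rewrite List.length_app H; last by left.
rewrite IH; last by move=> x Hx; apply: H; right.
by rewrite mulSn.
Qed.

Lemma length_flat_map_seq (Y : Type) (F : nat -> list Y) n :
  length (List.flat_map F (List.seq 0 n)) = \sum_(j < n) length (F j).
Proof.
elim: n => [|n IH]; first by rewrite big_ord0.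
rewrite List.seq_S List.flat_map_app List.length_app IH big_ord_recr /=.
by rewrite List.length_app /=; lia.
Qed.

Lemma length_filter (T : Type) (f : T -> bool) (s : list T) :
  length (List.filter f s) = \sum_(j <- s) (f j : nat).
Proof.
elim: s => [|x s IH]; first by rewrite big_nil.
rewrite big_cons /=; case: (f x) => /=; by rewrite IH.
Qed.

Lemma firstn_app_len (T : Type) (l l' : list T) : List.firstn (length l) (l ++ l')%list = l.
Proof. by elim: l => [|x l IH] //=; rewrite IH. Qed.

Lemma skipn_app_len (T : Type) (l l' : list T) : List.skipn (length l) (l ++ l')%list = l'.
Proof. by elim: l => [|x l IH] //=. Qed.

Lemma card_is_uniq (T : Type) (P : T -> Prop) k k' : card_is P k -> card_is P k' -> k = k'.
Proof.
move=> [s [Hs [Ps <-]]] [s' [Hs' [Ps' <-]]].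
have H1 := List.NoDup_incl_length Hs (fun x H => proj2 (Ps' x) (proj1 (Ps x) H)).
have H2 := List.NoDup_incl_length Hs' (fun x H => proj2 (Ps x) (proj1 (Ps' x) H)).
lia.
Qed.

Definition fsz {m} (fs : list (ctree 'I_m)) : nat :=
  List.fold_right (fun u acc => nverts u + acc) 0 fs.

Fixpoint okF {m} (A : 'M[bool]_m) (ps : list 'I_m) (fs : list (ctree 'I_m)) : Prop :=
  match ps, fs with
  | nil, nil => True
  | p :: ps', t :: fs' => A p (root_color t) = true /\ A_colored A t /\ okF A ps' fs'
  | _, _ => False
  end.

Definition colors {m} (A : 'M[bool]_m) (p : 'I_m) : list 'I_m :=
  List.filter (fun c => A p c) (enum 'I_m).

Definition mkF {m} (c : 'I_m) (j : nat) (fs0 : list (ctree 'I_m)) :=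
  CNode c (List.firstn j fs0) :: List.skipn j fs0.

Fixpoint forests {m} (A : 'M[bool]_m) (n : nat) (ps : list 'I_m) : list (list (ctree 'I_m)) :=
  match n with
  | 0 => match ps with nil => [:: nil] | _ => nil end
  | S n' => match ps with
            | nil => nil
            | p :: ps' =>
              List.flat_map (fun c => List.flat_map (fun j =>
                 List.map (mkF c j) (forests A n' (List.repeat c j ++ ps')%list))
                 (List.seq 0 n)) (colors A p)
            end
  end.

Lemma okF_len m (A : 'M[bool]_m) ps fs : okF A ps fs -> length fs = length ps.
Proof.
elim: ps fs => [|p ps IH] [|t fs] //= [_ [_ H]]; by rewrite (IH _ H).
Qed.

Lemma okF_cat m (A : 'M[bool]_m) ps1 ps2 fs1 fs2 :
  okF A ps1 fs1 -> okF A ps2 fs2 -> okF A (ps1 ++ ps2)%list (fs1 ++ fs2)%list.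
Proof.
elim: ps1 fs1 => [|p ps IH] [|t fs] //= [H1 [H2 H3]] H4; split => //; split => //; exact: IH.
Qed.

Lemma okF_split m (A : 'M[bool]_m) ps1 ps2 fs :
  okF A (ps1 ++ ps2)%list fs ->
  okF A ps1 (List.firstn (length ps1) fs) /\ okF A ps2 (List.skipn (length ps1) fs).
Proof.
elim: ps1 fs => [|p ps IH] fs /=; first by move=> H; split.
case: fs => [|t fs] //= [H1 [H2 H3]].
have [H4 H5] := IH _ H3; by repeat split.
Qed.

Lemma colored_iff m (A : 'M[bool]_m) c kids :
  List.fold_right (fun u acc => A c (root_color u) = true /\ A_colored A u /\ acc) True kids
  <-> okF A (List.repeat c (length kids)) kids.
Proof.
elim: kids => [|t kids IH] //=.
split => [[H1 [H2 H3]]|[H1 [H2 H3]]]; do 2 split => //; by apply/IH.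
Qed.

Lemma fsz_app m (fs1 fs2 : list (ctree 'I_m)) : fsz (fs1 ++ fs2)%list = fsz fs1 + fsz fs2.
Proof. elim: fs1 => [|t fs IH] //=; rewrite /fsz /= -/(fsz _) -/(fsz _) IH addnA; done. Qed.

Lemma len_le_fsz m (fs : list (ctree 'I_m)) : length fs <= fsz fs.
Proof.
elim: fs => [|t fs IH] //=; rewrite /fsz /= -/(fsz _); have : 0 < nverts t by case: t.
lia. Qed.

Lemma In_colors m (A : 'M[bool]_m) p c : List.In c (colors A p) <-> A p c = true.
Proof.
rewrite /colors List.filter_In; split => [[] //|H]; split => //.
by apply: In_mem; rewrite mem_enum.
Qed.

Lemma forests_S m (A : 'M[bool]_m) n p ps : forests A n.+1 (p :: ps) =
  List.flat_map (fun c => List.flat_map (fun j =>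
                 List.map (mkF c j) (forests A n (List.repeat c j ++ ps)%list))
                 (List.seq 0 n.+1)) (colors A p).
Proof. by []. Qed.

Lemma forests_spec m (A : 'M[bool]_m) n ps fs :
  List.In fs (forests A n ps) <-> okF A ps fs /\ fsz fs = n.
Proof.
elim: n ps fs => [|n IH] [|p ps] fs /=.
- split => [[<-|[]]|[]] //; case: fs => //; by left.
- split => [[]|]; case: fs => [|t fs] /= [_ H] //; move: H; rewrite /fsz /=.
  have : 0 < nverts t by case: t.
  lia.
- split => [[]|[H1 H2]]; case: fs H1 H2 => [|t fs] //= _; by rewrite /fsz.
- rewrite -forests_S; split.
  + move=> Hin; rewrite forests_S in Hin.
    apply List.in_flat_map in Hin as [c [Hc Hin]].
    apply List.in_flat_map in Hin as [j [Hj Hin]].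
    apply List.in_map_iff in Hin as [fs0 [<- H0]].
    have [Hok Hsz] := (IH _ _).1 H0.
    have Hlen := okF_len Hok.
    rewrite List.length_app List.repeat_length in Hlen.
    have [Hk Hr] := okF_split Hok.
    rewrite List.repeat_length in Hk Hr.
    split.
    * rewrite /mkF /=; split; first by apply/In_colors.
      split => //; apply/colored_iff.
      rewrite List.length_firstn; have -> : Nat.min j (length fs0) = j by lia.
      exact: Hk.
    * rewrite /mkF /fsz /= -/(fsz _) -/(fsz _) -Hsz.
      by rewrite -{3}(List.firstn_skipn j fs0) fsz_app addSn.
  + case: fs => [|[c kids] fs]; first by case.
    move=> [[H1 [H2 H3]] Hsz]; rewrite forests_S.
    rewrite /fsz /= -/(fsz _) -/(fsz _) in Hsz.
    apply/List.in_flat_map; exists c; split; first by apply/In_colors.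
    apply/List.in_flat_map; exists (length kids); split.
      apply/List.in_seq; have := len_le_fsz kids; lia.
    apply/List.in_map_iff; exists (kids ++ fs)%list; split.
      by rewrite /mkF firstn_app_len skipn_app_len.
    apply/IH; split.
      apply: okF_cat => //; exact/colored_iff.
    rewrite fsz_app; lia.
Qed.

Lemma forests_nodup m (A : 'M[bool]_m) n ps : List.NoDup (forests A n ps).
Proof.
elim: n ps => [|n IH] [|p ps]; try by repeat constructor.
rewrite forests_S.
apply: (@NoDup_flat_map_key _ _ _
          (fun fs => match fs with t :: _ => root_color t | nil => p end)).
- apply: uniq_NoDup; rewrite /colors.
  have -> : forall s, List.filter (fun c => A p c) s = filter (fun c => A p c) s.
    by elim => [|x s IHs] //=; rewrite IHs.
  by apply: filter_uniq; apply: enum_uniq.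
- move=> c _.
  apply: (@NoDup_flat_map_key _ _ _
          (fun fs => match fs with (CNode _ kids) :: _ => length kids | nil => 0 end)).
  + exact: List.seq_NoDup.
  + move=> j _; apply: NoDup_map_inj => //.
    move=> x y [E1 E2]; by rewrite -(List.firstn_skipn j x) -(List.firstn_skipn j y) E1 E2.
  + move=> j y Hj /List.in_map_iff [fs0 [<- H0]] /=.
    have [Hok _] := (forests_spec A n _ fs0).1 H0.
    have Hlen := okF_len Hok.
    rewrite List.length_app List.repeat_length in Hlen.
    rewrite List.length_firstn; lia.
- move=> c y _ /List.in_flat_map [j [_ /List.in_map_iff [fs0 [<- _]]]] //.
Qed.

Lemma colors_len m (A : 'M[bool]_m) r p : row_sums_eq A r -> length (colors A p) = r.
Proof.
move=> Hr; rewrite /colors length_filter big_enum /= -(Hr p).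
by apply: eq_bigl => j; rewrite inE.
Qed.

Lemma forests_len m (A : 'M[bool]_m) r n ps : row_sums_eq A r ->
  length (forests A n ps) = r ^ n * g n (length ps).
Proof.
move=> Hr; elim: n ps => [|n IH] [|p ps]; try by rewrite /= ?muln0.
rewrite forests_S.
rewrite (@length_flat_map_const _ _ _ _ (r ^ n * g n.+1 (length ps).+1)).
  by rewrite (colors_len p Hr) expnS mulnA.
move=> c _; rewrite length_flat_map_seq /= big_distrr /=.
apply: eq_bigr => j _.
by rewrite List.length_map IH List.length_app List.repeat_length.
Qed.

Definition trees {m} (A : 'M[bool]_m) (i : 'I_m) (n : nat) : list (ctree 'I_m) :=
  match n with
  | 0 => nil
  | S n' => List.flat_map (fun j => List.map (CNode i) (forests A n' (List.repeat i j)))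
                          (List.seq 0 n)
  end.

Lemma trees_spec m (A : 'M[bool]_m) i n t :
  List.In t (trees A i n) <-> colored_trees_root A i n t.
Proof.
case: n => [|n].
  split => [[]|[H _]]; by case: t H.
rewrite /trees; split.
- move=> Hin.
  apply List.in_flat_map in Hin as [j [Hj Hin]].
  apply List.in_map_iff in Hin as [fs [<- H0]].
  have [Hok Hsz] := (forests_spec A n _ fs).1 H0.
  have Hl := okF_len Hok; rewrite List.repeat_length in Hl.
  split; first by rewrite -Hsz.
  split => //; apply/colored_iff; rewrite Hl; exact: Hok.
- case: t => c kids [Hn [Hcol Hc]]; simpl in Hc; subst c.
  have Hsz : fsz kids = n by rewrite /fsz; case: Hn.
  apply/List.in_flat_map; exists (length kids); split.
    apply/List.in_seq; have := len_le_fsz kids; lia.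
  apply/List.in_map_iff; exists kids; split => //.
  apply/forests_spec; split => //; exact/colored_iff.
Qed.

Lemma trees_nodup m (A : 'M[bool]_m) i n : List.NoDup (trees A i n).
Proof.
case: n => [|n]; first by constructor.
apply: (@NoDup_flat_map_key _ _ _ (fun t => match t with CNode _ kids => length kids end)).
- exact: List.seq_NoDup.
- move=> j _; apply: NoDup_map_inj; last exact: forests_nodup.
  by move=> x y [].
- move=> j y _ /List.in_map_iff [fs [<- H0]].
  have [Hok _] := (forests_spec A n _ fs).1 H0.
  by rewrite (okF_len Hok) List.repeat_length.
Qed.

Lemma trees_len m (A : 'M[bool]_m) r i n : row_sums_eq A r ->
  length (trees A i n.+1) = r ^ n * g n.+1 1.
Proof.
move=> Hr; rewrite /trees length_flat_map_seq [g n.+1 1]/= big_distrr.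
apply: eq_bigr => j _.
by rewrite addn0 List.length_map (forests_len _ _ Hr) List.repeat_length.
Qed.

Lemma root_count m r (A : 'M[bool]_m) : row_sums_eq A r ->
  forall (i : 'I_m) (n : nat), 1 <= n -> tA_root A i n (r ^ n.-1 * catalan n.-1).
Proof.
move=> Hr i [|n] // _.
exists (trees A i n.+1); split; first exact: trees_nodup.
split; first by move=> t; exact: trees_spec.
by rewrite (trees_len _ _ Hr) g_catalan.
Qed.

Definition alltrees {m} (A : 'M[bool]_m) (n : nat) : list (ctree 'I_m) :=
  List.flat_map (fun i => trees A i n) (enum 'I_m).

Lemma length_size (T : Type) (s : list T) : length s = size s.
Proof. by elim: s => //= x s ->. Qed.

Lemma all_count m r (A : 'M[bool]_m) : row_sums_eq A r ->
  forall n : nat, 1 <= n -> tA A n (m * (r ^ n.-1 * catalan n.-1)).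
Proof.
move=> Hr [|n] // _.
exists (alltrees A n.+1); split.
  apply: (@NoDup_flat_map_key _ _ _ root_color).
  - apply: uniq_NoDup; exact: enum_uniq.
  - move=> i _; exact: trees_nodup.
  - by move=> i t _ /trees_spec [_ [_ ->]].
split.
  move=> t; split.
  - move=> /List.in_flat_map [i [_ /trees_spec [H1 [H2 _]]]]; by split.
  - move=> [H1 H2]; apply/List.in_flat_map; exists (root_color t); split.
      by apply: In_mem; rewrite mem_enum.
    by apply/trees_spec.
rewrite /alltrees (@length_flat_map_const _ _ _ _ (r ^ n * catalan n)).
  by rewrite length_size size_enum_ord.
by move=> i _; rewrite (trees_len _ _ Hr) g_catalan.
Qed.

Theorem theorem20 (m r : nat) (A : 'M[bool]_m) :
  row_sums_eq A r ->
  (forall (i : 'I_m) (n : nat), 1 <= n -> tA_root A i n (r ^ n.-1 * catalan n.-1)) /\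
  (forall n : nat, 1 <= n -> tA A n (m * (r ^ n.-1 * catalan n.-1))) /\
  (forall i j : 'I_m, interchangeable A i j) /\
  (forall B : 'M[bool]_m, row_sums_eq B r -> strictly_equiv A B).
Proof.
move=> Hr; split; first exact: root_count.
split; first exact: all_count.
split.
  move=> i j n k Hn; split => H.
  - rewrite (card_is_uniq H (root_count Hr i Hn)); exact: root_count.
  - rewrite (card_is_uniq H (root_count Hr j Hn)); exact: root_count.
move=> B HB n i k Hn; split => H.
- rewrite (card_is_uniq H (root_count Hr i Hn)); exact: root_count.
- rewrite (card_is_uniq H (root_count HB i Hn)); exact: root_count.
Qed.
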